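(* Let $N\ge1$, $K>0$, $r_1,\dots,r_N>0$, and let $(\mu_{ij})$ be a nonnegative, symmetric, irreducible $N\times N$ matrix. Let $v(t)$ be the solution of $$\frac{dv_i}{dt}=v_i\left[r_i-\frac{1}{K}\sum_{j=1}^Nr_jv_j\right]+\sum_{j=1}^N\mu_{ij}(v_j-v_i),\qquad i=1,\dots,N,$$ with initial datum $v(0)\in[0,\infty)^N$ not identically zero, and let $\mathcal{N}(t)=\sum_{i=1}^Nv_i(t)$. Then $\mathcal{N}(t)$ converges exponentially fast to $K$ as $t\to\infty$. Moreover, for all $t\ge0$, $$\min\{\mathcal{N}_{min}(t),\mathcal{N}_{max}(t)\}\le\mathcal{N}(t)\le\max\{\mathcal{N}_{min}(t),\mathcal{N}_{max}(t)\},$$ where $\mathcal{N}_{min}$ and $\mathcal{N}_{max}$ are the solutions of the logistic equations $\frac{du}{dt}=\xi^{\pm}u\left(1-\frac uK\right)$, $u(0)=\mathcal{N}(0)$, with $\xi^-=\min\{r_1,\dots,r_N\}$ (for $\mathcal{N}_{min}$) and $\xi^+=\max\{r_1,\dots,r_N\}$ (for $\mathcal{N}_{max}$). *)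

(* Defs.v *)
From HB Require Import structures.
From mathcomp Require Import all_boot all_order all_algebra.
From mathcomp Require Import all_classical all_reals all_analysis.
Set Implicit Arguments. Unset Strict Implicit. Unset Printing Implicit Defensive.
Import Order.TTheory GRing.Theory Num.Theory.
Import numFieldNormedType.Exports.
Local Open Scope ring_scope.
Local Open Scope classical_set_scope.

Definition irreducible_mx (R : nzRingType) (N : nat) (mu : 'I_N -> 'I_N -> R) :=
  forall S : {set 'I_N}, S != finset.set0 -> S != [set: 'I_N]%SET ->
    exists i j, [/\ i \in S, j \notin S & mu i j != 0].

Definition seqmin (R : realDomainType) (s : seq R) : R := foldr Num.min (head 0 s) s.
Definition seqmax (R : realDomainType) (s : seq R) : R := foldr Num.max (head 0 s) s.

Definition xi_minus (R : realDomainType) (N : nat) (r : 'I_N -> R) : R :=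
  seqmin [seq r i | i <- enum 'I_N].
Definition xi_plus (R : realDomainType) (N : nat) (r : 'I_N -> R) : R :=
  seqmax [seq r i | i <- enum 'I_N].

Definition total_pop (R : realDomainType) (N : nat) (v : 'I_N -> R -> R) (t : R) : R :=
  \sum_(i < N) v i t.

(* Main.v *)
Require Import Defs.
From HB Require Import structures.
From mathcomp Require Import all_boot all_order all_algebra.
From mathcomp Require Import all_classical all_reals all_analysis.
From mathcomp Require Import ring lra.
Import Order.TTheory GRing.Theory Num.Theory.
Import numFieldNormedType.Exports.
Local Open Scope ring_scope.
Local Open Scope classical_set_scope.

Section H.
Context {R : realType}.

Definition nsq (y : R) : R := (Num.min y 0) ^+ 2.

Lemma nsq_derive (x : R) : is_derive x 1 nsq (2 * Num.min x 0).
Proof.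
have [x0|x0|->] := ltgtP x 0.
- apply: (near_eq_is_derive (f := fun y : R => y ^+ 2)).
    near=> y; rewrite /nsq; congr (_ ^+ 2).
    rewrite /Num.min ifT //; near: y.
    exact: (lt_nbhsl x0).
  have := @is_deriveX _ _ id 2 x 1 1 (is_derive_id _ _).
  have -> : (id ^+ 2 : R -> R) = (fun y : R => y ^+ 2).
    by apply/funext => y; rewrite exprfctE.
  move=> H; apply: (is_derive_eq H).
  by rewrite expr1; exact: mulr1.
- apply: (near_eq_is_derive (f := fun _ : R => (0:R))).
    near=> y; rewrite /nsq /=.
    have : - y < 0.
      by near: y; apply: Nlt_nbhsl; rewrite oppr_lt0.
    by rewrite oppr_lt0 => y0; rewrite (min_r (ltW y0)) expr0n.
  rewrite mulr0; exact: is_derive_cst.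
- rewrite mulr0.
  apply: DeriveDef; last first.
    apply: cvg_lim => //.
    apply/cvgrPdist_lt => e e0; near=> h.
    have -> : (nsq \o shift 0) h%:A - nsq 0 = nsq h.
      by rewrite /= addr0 [h%:A]mulr1 /nsq minxx expr0n subr0.
    rewrite sub0r normrN /nsq normrM normfV.
    have [h0|h0] := leP h 0.
      rewrite normrX expr2 mulrA mulVf ?mul1r; last first.
        by rewrite normr_eq0; near: h; exact: nbhs_dnbhs_neq.
      near: h; exact: dnbhs0_lt.
    rewrite expr0n /= normr0 mulr0 //.
  apply/cvg_ex; exists 0.
  apply/cvgrPdist_lt => e e0; near=> h.
  have -> : (nsq \o shift 0) h%:A - nsq 0 = nsq h.
    by rewrite /= addr0 [h%:A]mulr1 /nsq minxx expr0n subr0.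
  rewrite sub0r normrN /nsq normrM normfV.
  have [h0|h0] := leP h 0.
    rewrite normrX expr2 mulrA mulVf ?mul1r; last first.
      by rewrite normr_eq0; near: h; exact: nbhs_dnbhs_neq.
    near: h; exact: dnbhs0_lt.
  rewrite expr0n /= normr0 mulr0 //.
Unshelve. all: by end_near.
Qed.


Lemma nsq_cont : continuous nsq.
Proof.
move=> x; apply: differentiable_continuous; apply/derivable1_diffP.
by have [] := nsq_derive x.
Qed.

Lemma mono0 (f df : R -> R) (t : R) : 0 <= t ->
  {within [set s : R | 0 <= s], continuous f} ->
  (forall s, 0 < s -> s < t -> is_derive s 1 f (df s)) ->
  (forall s, 0 < s -> s < t -> df s <= 0) -> f t <= f 0.
Proof.
move=> t0 cf fd dfn.
apply: (@ler0_derive1_le_cc R f 0 t).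
- move=> x; rewrite in_itv /= => /andP[x0 xt]; by have [] := fd x x0 xt.
- move=> x; rewrite in_itv /= => /andP[x0 xt].
  by have := fd x x0 xt => H; rewrite derive1E derive_val dfn.
- apply: continuous_subspaceW cf => s /=; rewrite in_itv /= => /andP[]//.
- by rewrite in_itv /= lexx t0.
- by rewrite in_itv /= lexx t0.
- exact: t0.
Qed.

Lemma within_cont_sum (A : set R) n (h : 'I_n -> R -> R) :
  (forall i, {within A, continuous (h i)}) ->
  {within A, continuous (fun s => \sum_(i < n) h i s)}.
Proof.
move=> ch.
have -> : (fun s => \sum_(i < n) h i s) = \sum_(i < n) h i.
  by apply/funext => s; rewrite fct_sumE.
apply: (big_ind (fun g : R -> R => {within A, continuous g})) => //.
- by move=> x; apply: cvg_cst.
- by move=> f g cf cg; exact: within_continuousD.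
Qed.


Lemma expc_derive (c s : R) :
  is_derive s 1 (fun u => expR (c * u)) (expR (c * s) * c).
Proof.
have h1 : is_derive s 1 (fun u : R => c * u) c.
  have := @is_deriveZ R R^o R^o id c s 1 1 (is_derive_id _ _).
  by move=> H; apply: (is_derive_eq H); rewrite /GRing.scale /= mulr1.
exact: (@is_derive1_comp R expR (fun u => c * u) s _ _ (is_derive_expR _) h1).
Qed.

Lemma expc_cont (c : R) : continuous (fun u => expR (c * u)).
Proof.
move=> x; apply: differentiable_continuous; apply/derivable1_diffP.
by have [] := expc_derive c x.
Qed.

Lemma negpart n (f df : 'I_n -> R -> R) :
  (forall i, {within [set t : R | 0 <= t], continuous (f i)}) ->
  (forall i (t : R), 0 < t -> is_derive t 1 (f i) (df i t)) ->
  (forall i, 0 <= f i 0) ->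
  (forall T : R, 0 < T -> exists M : R, forall t : R, 0 < t -> t < T ->
     \sum_(i < n) Num.min (f i t) 0 * df i t <= M * \sum_(i < n) nsq (f i t)) ->
  forall i (t : R), 0 <= t -> 0 <= f i t.
Proof.
move=> cf fd f0 hb i t t0.
have [M hM] := hb (t + 1) (ltr_wpDl t0 ltr01).
pose M' := Num.max M 0.
have MM' : M <= M' by rewrite le_max lexx.
have M'0 : 0 <= M' by rewrite le_max lexx orbT.
pose E := \sum_(j < n) (nsq \o f j).
have EE s : E s = \sum_(j < n) nsq (f j s) by rewrite /E fct_sumE.
have Ege0 s : 0 <= E s by rewrite EE sumr_ge0 // => j _; rewrite /nsq sqr_ge0.
have E0 : E 0 = 0.
  by rewrite EE big1 // => j _; rewrite /nsq min_r ?expr0n.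
pose c := - (2 * M').
pose G := fun s => E s * expR (c * s).
have cG : {within [set s : R | 0 <= s], continuous G}.
  move=> x; apply: cvgM.
    apply: (big_ind (fun g : R -> R => {within [set s : R | 0 <= s], continuous g})) => //.
    - by move=> y; apply: cvg_cst.
    - by move=> g1 g2 c1 c2; exact: within_continuousD.
    - move=> j _; apply: within_continuous_comp => //.
      by move=> y _; exact: nsq_cont.
  exact: (continuous_subspaceT (@expc_cont c)).
have dG (s : R) : 0 < s -> is_derive s 1 G
    (E s *: (expR (c * s) * c) + expR (c * s) *: \sum_(j < n) (2 * Num.min (f j s) 0 * df j s)).
  move=> s0.
  have dE : is_derive s 1 E (\sum_(j < n) (2 * Num.min (f j s) 0 * df j s)).
    apply: is_derive_sum => j.
    exact: (@is_derive1_comp R nsq (f j) s _ _ (nsq_derive _) (fd j s s0)).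
  exact: (@is_deriveM R R^o E (fun u => expR (c * u)) s 1 _ _ dE (expc_derive c s)).
have := @mono0 G _ t t0 cG (fun s s0 _ => dG s s0).
have /[swap]/[apply] : forall s : R, 0 < s -> s < t ->
   E s *: (expR (c * s) * c) + expR (c * s) *: \sum_(j < n) (2 * Num.min (f j s) 0 * df j s) <= 0.
  move=> s s0 st.
  have hs := hM s s0 (ltr_wpDr ler01 st).
  rewrite /GRing.scale /= -EE in hs *.
  have -> : \sum_(j < n) 2 * Num.min (f j s) 0 * df j s = 2 * \sum_(j < n) Num.min (f j s) 0 * df j s.
    by rewrite mulr_sumr; apply: eq_bigr => j _; rewrite mulrA.
  have ex0 := expR_gt0 (c * s).
  have : \sum_(j < n) Num.min (f j s) 0 * df j s <= M' * E s.
    by apply: (le_trans hs); rewrite ler_wpM2r.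
  rewrite /c; nra.
rewrite /G E0 mul0r => Gt.
have Et : E t = 0.
  apply/eqP; rewrite eq_le Ege0 andbT.
  by rewrite -(pmulr_lle0 _ (expR_gt0 (c * t))).
have : nsq (f i t) = 0.
  move: Et; rewrite EE => /eqP; rewrite psumr_eq0; last first.
    by move=> j _; rewrite /nsq sqr_ge0.
  by move=> /allP /(_ i (mem_index_enum _)) /implyP /(_ isT) /eqP.
rewrite /nsq => /eqP; rewrite sqrf_eq0.
by case: leP => // fl /eqP fe; move: fl; rewrite fe ltxx.
Qed.


Lemma nsq_min (y : R) : Num.min y 0 * y = nsq y.
Proof. by rewrite /nsq expr2; have [h|h] := leP y 0; rewrite ?mul0r ?mulr0. Qed.

Lemma negpart1 (f df : R -> R) :
  {within [set t : R | 0 <= t], continuous f} ->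
  (forall t : R, 0 < t -> is_derive t 1 f (df t)) ->
  0 <= f 0 ->
  (forall T : R, 0 < T -> exists M : R, forall t : R, 0 < t -> t < T ->
     Num.min (f t) 0 * df t <= M * nsq (f t)) ->
  forall t : R, 0 <= t -> 0 <= f t.
Proof.
move=> cf fd f0 hb t t0.
apply: (@negpart 1 (fun _ => f) (fun _ => df) (fun _ => cf) (fun _ => fd) (fun _ => f0) _ ord0 t t0).
move=> T T0; have [M hM] := hb T T0; exists M => s s0 sT.
by rewrite !big_ord1; exact: hM.
Qed.

Lemma within_cont_lin (x y : R -> R) (a b c : R) :
  {within [set t : R | 0 <= t], continuous x} ->
  {within [set t : R | 0 <= t], continuous y} ->
  {within [set t : R | 0 <= t], continuous (fun t => a + b * x t + c * y t)}.
Proof.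
move=> cx cy z; apply: cvgD; [apply: cvgD|].
- exact: cvg_cst.
- by apply: cvgM; [exact: cvg_cst| exact: cx].
- by apply: cvgM; [exact: cvg_cst| exact: cy].
Qed.

Lemma cmp (K a : R) (x y hx hy : R -> R) :
  {within [set t : R | 0 <= t], continuous x} ->
  {within [set t : R | 0 <= t], continuous y} ->
  (forall t : R, 0 < t -> is_derive t 1 x (a * x t * (1 - x t / K) + hx t)) ->
  (forall t : R, 0 < t -> is_derive t 1 y (a * y t * (1 - y t / K) + hy t)) ->
  (forall t : R, 0 < t -> hx t <= hy t) -> x 0 <= y 0 ->
  forall t : R, 0 <= t -> x t <= y t.
Proof.
move=> cx cy dx dy hxy x0y0 t t0.
rewrite -subr_ge0.
pose w := fun t : R => a + (- a / K) * x t + (- a / K) * y t.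
apply: (@negpart1 (fun t => y t - x t)
   (fun t => (a * y t * (1 - y t / K) + hy t) - (a * x t * (1 - x t / K) + hx t))) => //.
- move=> z; apply: cvgB; [exact: cy| exact: cx].
- by move=> s s0; apply: is_deriveB; [exact: dy| exact: dx].
- by rewrite subr_ge0.
move=> T T0.
have cw : {within `[0, T], continuous w}.
  apply: (continuous_subspaceW _ (@within_cont_lin x y a (- a / K) (- a / K) cx cy)).
  by move=> s /=; rewrite in_itv /= => /andP[].
have [c _ hc] := EVT_max (ltW T0) cw.
exists (w c) => s s0 sT.
have ws : w s <= w c by apply: hc; rewrite in_itv /= (ltW s0) (ltW sT).
have -> : a * y s * (1 - y s / K) + hy s - (a * x s * (1 - x s / K) + hx s)
   = w s * (y s - x s) + (hy s - hx s) by rewrite /w; ring.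
rewrite mulrDr mulrCA nsq_min.
have hn : 0 <= nsq (y s - x s) by rewrite /nsq sqr_ge0.
have h1 : Num.min (y s - x s) 0 * (hy s - hx s) <= 0.
  by rewrite mulr_le0_ge0 ?ge_min ?lexx ?orbT // subr_ge0 hxy.
have h2 : w s * nsq (y s - x s) <= w c * nsq (y s - x s) by rewrite ler_wpM2r.
by rewrite -[X in _ <= X]addr0 lerD.
Qed.

Lemma expdecay (f df : R -> R) (lam : R) :
  {within [set t : R | 0 <= t], continuous f} ->
  (forall t : R, 0 < t -> is_derive t 1 f (df t)) ->
  (forall t : R, 0 < t -> df t <= - lam * f t) ->
  forall t : R, 0 <= t -> f t * expR (lam * t) <= f 0.
Proof.
move=> cf fd hd t t0.
have := @mono0 (fun s => f s * expR (lam * s))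
  (fun s => f s *: (expR (lam * s) * lam) + expR (lam * s) *: df s) t t0.
rewrite mulr0 expR0 mulr1; apply.
- move=> z; apply: cvgM; first exact: cf.
  exact: (continuous_subspaceT (@expc_cont lam)).
- move=> s s0 _.
  exact: (@is_deriveM R R^o f (fun u => expR (lam * u)) s 1 _ _ (fd s s0) (expc_derive lam s)).
- move=> s s0 _; rewrite /GRing.scale /=.
  have e0 := expR_gt0 (lam * s); have := hd s s0; nra.
Qed.

Lemma foldr_min_le (x0 : R) (s : seq R) x : x \in s -> foldr Num.min x0 s <= x.
Proof.
elim: s => // y s IH; rewrite inE => /orP[/eqP ->|xs] /=; first by rewrite ge_min lexx.
by rewrite ge_min IH ?orbT.
Qed.

Lemma foldr_max_ge (x0 : R) (s : seq R) x : x \in s -> x <= foldr Num.max x0 s.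
Proof.
elim: s => // y s IH; rewrite inE => /orP[/eqP ->|xs] /=; first by rewrite le_max lexx.
by rewrite le_max IH ?orbT.
Qed.

Lemma foldr_min_mem (x0 : R) (s : seq R) : foldr Num.min x0 s \in x0 :: s.
Proof.
elim: s => [|y s IH] /=; first by rewrite inE.
rewrite /Num.min; case: ifP => _; first by rewrite !inE eqxx orbT.
move: IH; rewrite !inE => /orP[->//|->]; by rewrite !orbT.
Qed.


Lemma le_sum_single n (F : 'I_n -> R) i : (forall j, 0 <= F j) -> F i <= \sum_(j < n) F j.
Proof. by move=> F0; rewrite (bigD1 i) //= lerDl sumr_ge0. Qed.

Lemma decay_fin (f0 ft lam t : R) : ft * expR (lam * t) <= f0 ->
  ft <= f0 * expR (- lam * t).
Proof. by move=> h; rewrite mulNr expRN ler_pdivlMr // expR_gt0. Qed.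
End H.

Theorem lemma5p2 (R : realType) (N : nat) (K : R) (r : 'I_N -> R)
  (mu : 'I_N -> 'I_N -> R) (v : 'I_N -> R -> R) (umin umax : R -> R) :
  (0 < N)%N -> 0 < K -> (forall i, 0 < r i) ->
  (forall i j, 0 <= mu i j) -> (forall i j, mu i j = mu j i) ->
  irreducible_mx mu ->
  (* v solves the system on [0, +oo) *)
  (forall i, {within [set t : R | 0 <= t], continuous (v i)}) ->
  (forall i (t : R), 0 < t ->
     is_derive t 1 (v i)
       (v i t * (r i - K^-1 * \sum_(j < N) r j * v j t)
        + \sum_(j < N) mu i j * (v j t - v i t))) ->
  (forall i, 0 <= v i 0) -> (exists i, v i 0 != 0) ->
  (* umin solves the logistic equation with rate xi^- and u(0) = N(0) *)
  {within [set t : R | 0 <= t], continuous umin} ->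
  (forall t : R, 0 < t ->
     is_derive t 1 umin (xi_minus r * umin t * (1 - umin t / K))) ->
  umin 0 = total_pop v 0 ->
  (* umax solves the logistic equation with rate xi^+ and u(0) = N(0) *)
  {within [set t : R | 0 <= t], continuous umax} ->
  (forall t : R, 0 < t ->
     is_derive t 1 umax (xi_plus r * umax t * (1 - umax t / K))) ->
  umax 0 = total_pop v 0 ->
  (exists (C lam : R), 0 < lam /\
     forall t : R, 0 <= t -> `|total_pop v t - K| <= C * expR (- lam * t)) /\
  (forall t : R, 0 <= t ->
     Num.min (umin t) (umax t) <= total_pop v t <= Num.max (umin t) (umax t)).
Proof.
move=> N0 K0 r0 mu0 musym _ cv dv v0 [k vk0] cumin dumin umin0 cumax dumax umax0.
have Kn0 : K != 0 by rewrite gt_eqF.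
pose S := fun t : R => \sum_(j < N) r j * v j t.
set xm := xi_minus r; set xp := xi_plus r.
set s := [seq r i | i <- enum 'I_N].
have rs i : r i \in s by apply: map_f; rewrite mem_enum.
have hxm i : xm <= r i by apply: foldr_min_le.
have hxp i : r i <= xp by apply: foldr_max_ge.
have xm0 : 0 < xm.
  have sn : s != [::] by rewrite -size_eq0 size_map size_enum_ord -lt0n.
  have hd : head 0 s \in s by move: sn; case: (s) => //= a l _; rewrite mem_head.
  have spos x : x \in s -> 0 < x by move=> /mapP[i _ ->].
  have := @foldr_min_mem R (head 0 s) s; rewrite /xm /xi_minus /seqmin -/s.
  by rewrite inE => /orP[/eqP ->|]; apply: spos.
have xmp : xm <= xp by apply: (le_trans (hxm k)).
have vpos : forall i (t : R), 0 <= t -> 0 <= v i t.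
  apply: (@negpart R N v (fun i t => v i t * (r i - K^-1 * S t)
        + \sum_(j < N) mu i j * (v j t - v i t))) => //.
  move=> T T0.
  have cB : {within `[0, T], continuous (fun t => \sum_(j < N) `|v j t|)}.
    have : {within [set t : R | 0 <= t], continuous (fun t => \sum_(j < N) `|v j t|)}.
      apply: (@within_cont_sum R _ N (fun j t => `|v j t|)).
      move=> j; apply: within_continuous_comp => //.
      by move=> z _; exact: norm_continuous.
    apply: continuous_subspaceW.
    by move=> z /=; rewrite in_itv /= => /andP[].
  have [c _ hc] := EVT_max (ltW T0) cB.
  pose B := \sum_(j < N) `|v j c|.
  have hvB j t : 0 < t -> t < T -> `|v j t| <= B.
    move=> t0 tT; apply: le_trans (hc t _); last by rewrite in_itv /= (ltW t0) (ltW tT).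
    by apply: (@le_sum_single R N (fun j => `|v j t|)) => i; exact: normr_ge0.
  pose A := \sum_(i < N) r i + K^-1 * \sum_(j < N) r j * B.
  pose Mmu := \sum_(i < N) \sum_(j < N) mu i j.
  exists (A + Mmu) => t t0 tT.
  set E := \sum_(i < N) nsq (v i t).
  have nsqE i : nsq (v i t) <= E by apply: (@le_sum_single R N (fun i => nsq (v i t))) => j; rewrite /nsq sqr_ge0.
  have E0 : 0 <= E by rewrite sumr_ge0 // => j _; rewrite /nsq sqr_ge0.
  have hS : - S t <= \sum_(j < N) r j * B.
    rewrite -sumrN; apply: ler_sum => j _.
    rewrite -mulrN; apply: ler_wpM2l; first exact: ltW.
    by apply: (le_trans _ (hvB j t t0 tT)); rewrite -normrN; exact: ler_norm.
  have hA i : r i - K^-1 * S t <= A.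
    rewrite /A; apply: lerD.
      by apply: (@le_sum_single R N (fun i => r i)) => j; exact: ltW.
    rewrite -mulrN; apply: ler_wpM2l; [by rewrite invr_ge0 ltW| exact: hS].
  rewrite mulrDl [A * _]mulr_sumr /Mmu [(\sum_(i < N) _) * E]mulr_suml -big_split /=.
  apply: ler_sum => i _.
  rewrite mulrDr mulrA nsq_min; apply: lerD.
    rewrite [_ * (r i - _)]mulrC; apply: ler_wpM2r; [by rewrite /nsq sqr_ge0| exact: hA].
  rewrite mulr_sumr mulr_suml; apply: ler_sum => j _.
  rewrite mulrCA; apply: ler_wpM2l; first exact: mu0.
  have mi := nsq_min (v i t); have hi := nsqE i; have hj := nsqE j.
  have mi0 : Num.min (v i t) 0 <= 0 by rewrite ge_min lexx orbT.
  have mjv : Num.min (v j t) 0 <= v j t by rewrite ge_min lexx.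
  move: mi hi hj mi0 mjv; rewrite /nsq.
  set a := Num.min (v i t) 0; set b := Num.min (v j t) 0.
  move=> mi hi hj mi0 mjv.
  have : a * v j t <= a * b by apply: ler_wnM2l.
  nra.
pose Nt := total_pop v.
pose dN := fun t => S t * (1 - Nt t / K).
have NtE : Nt = \sum_(i < N) v i by apply/funext => t; rewrite /Nt /total_pop fct_sumE.
have cN : {within [set t : R | 0 <= t], continuous Nt}.
  by rewrite NtE; apply: (big_ind (fun g : R -> R => {within [set s : R | 0 <= s], continuous g})) => //;
    [move=> y; apply: cvg_cst| move=> g1 g2 c1 c2; exact: within_continuousD].
have dNt (t : R) : 0 < t -> is_derive t 1 Nt (dN t).
  move=> t0; have := is_derive_sum (fun i => dv i t t0); rewrite -NtE => H.
  apply: (is_derive_eq H).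
  rewrite big_split /=.
  have -> : \sum_(i < N) \sum_(j < N) mu i j * (v j t - v i t) = 0.
    have -> : \sum_(i < N) \sum_(j < N) mu i j * (v j t - v i t) =
      \sum_(i < N) \sum_(j < N) mu i j * v j t - \sum_(i < N) \sum_(j < N) mu i j * v i t.
      rewrite -sumrB; apply: eq_bigr => i _; rewrite -sumrB; apply: eq_bigr => j _.
      by rewrite mulrBr.
    rewrite exchange_big /=; apply/eqP; rewrite subr_eq0; apply/eqP.
    by apply: eq_bigr => i _; apply: eq_bigr => j _; rewrite musym.
  have -> : \sum_(i < N) v i t * (r i - K^-1 * \sum_(j < N) r j * v j t)
     = S t - K^-1 * S t * Nt t.
    rewrite /Nt /total_pop /S /=; set Sv := \sum_(j < N) r j * v j t.
    rewrite [K^-1 * Sv * _]mulr_sumr /Sv -sumrB; apply: eq_bigr => i _; ring.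
  by rewrite /dN; field.
have Nt0 : 0 < Nt 0.
  apply: lt_le_trans (@le_sum_single R N (fun i => v i 0) k v0).
  by rewrite lt_def vk0 v0.
have Sge (t : R) : 0 <= t -> xm * Nt t <= S t.
  move=> t0; rewrite /Nt /total_pop mulr_sumr -subr_ge0 -sumrB sumr_ge0 // => j _.
  by rewrite -mulrBl mulr_ge0 ?subr_ge0 ?vpos.
have Sle (t : R) : 0 <= t -> S t <= xp * Nt t.
  move=> t0; rewrite /Nt /total_pop mulr_sumr -subr_ge0 -sumrB sumr_ge0 // => j _.
  by rewrite -mulrBl mulr_ge0 ?subr_ge0 ?vpos.
have Ntge (t : R) : 0 <= t -> 0 <= Nt t.
  by move=> t0; rewrite /Nt /total_pop sumr_ge0 // => j _; rewrite vpos.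
have dNE (t : R) : dN t = S t / K * (K - Nt t) by rewrite /dN; field.
have dumin' (t : R) : 0 < t -> is_derive t 1 umin (xm * umin t * (1 - umin t / K) + 0).
  by move=> t0; rewrite addr0; exact: dumin.
have dumax' (t : R) : 0 < t -> is_derive t 1 umax (xp * umax t * (1 - umax t / K) + 0).
  by move=> t0; rewrite addr0; exact: dumax.
have dNa (a : R) (t : R) : 0 < t -> is_derive t 1 Nt (a * Nt t * (1 - Nt t / K) + (S t - a * Nt t) * (1 - Nt t / K)).
  by move=> t0; apply: (is_derive_eq (dNt t t0)); rewrite /dN; ring.
have Sge0 (t : R) : 0 <= t -> 0 <= S t.
  move=> t0; apply: (le_trans _ (Sge t t0)); apply: mulr_ge0; [exact: ltW| exact: Ntge].
have SK0 (t : R) : 0 <= t -> 0 <= S t / K.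
  by move=> t0; apply: divr_ge0; [exact: Sge0| exact: ltW].
have [NK|KN] := leP (Nt 0) K.
- have hNK (t : R) : 0 <= t -> Nt t <= K.
    move=> t0; rewrite -subr_ge0.
    apply: (@negpart1 R (fun t => K - Nt t) (fun t => 0 - dN t) _ _ _ _ t t0).
    + by move=> z; apply: cvgB; [exact: cvg_cst| exact: cN].
    + by move=> u u0; have := dNt u u0 => H; apply: is_deriveB.
    + by rewrite subr_ge0.
    move=> T T0; exists 0 => u u0 _; rewrite mul0r sub0r dNE.
    rewrite mulrN oppr_le0 mulrCA nsq_min; apply: mulr_ge0; first exact: SK0 (ltW u0).
    by rewrite /nsq sqr_ge0.
  have Kpos (t : R) : 0 <= t -> 0 <= 1 - Nt t / K.
    by move=> t0; rewrite subr_ge0 ler_pdivrMr // mul1r hNK.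
  have hlow (t : R) : 0 <= t -> umin t <= Nt t.
    apply: (@cmp R K xm umin Nt (fun _ => 0) (fun t => (S t - xm * Nt t) * (1 - Nt t / K)) cumin cN dumin' (dNa xm)); last by rewrite umin0.
    move=> u u0; apply: mulr_ge0; last exact: Kpos (ltW u0).
    by rewrite subr_ge0; exact: Sge (ltW u0).
  have hup (t : R) : 0 <= t -> Nt t <= umax t.
    apply: (@cmp R K xp Nt umax (fun t => (S t - xp * Nt t) * (1 - Nt t / K)) (fun _ => 0) cN cumax (dNa xp) dumax'); last by rewrite umax0.
    move=> u u0; apply: mulr_le0_ge0; last exact: Kpos (ltW u0).
    by rewrite subr_le0; exact: Sle (ltW u0).
  split; last first.
    move=> t t0; apply/andP; split; first by rewrite ge_min hlow.
    by rewrite le_max hup ?orbT.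
  have Nmono (t : R) : 0 <= t -> Nt 0 <= Nt t.
    move=> t0; rewrite -lerN2.
    apply: (@mono0 R (fun t => - Nt t) (fun t => - dN t) t t0).
    + by move=> z; apply: cvgN; exact: cN.
    + by move=> u u0 _; have := dNt u u0 => H; apply: is_deriveN.
    + move=> u u0 _; rewrite oppr_le0 /dN; apply: mulr_ge0; first exact: Sge0 (ltW u0).
      exact: Kpos (ltW u0).
  pose lam := xm * Nt 0 / K.
  exists `|Nt 0 - K|, lam; split; first by rewrite divr_gt0 ?mulr_gt0.
  move=> t t0.
  rewrite -normrN opprB ger0_norm; last by rewrite subr_ge0 hNK.
  rewrite -normrN opprB ger0_norm; last by rewrite subr_ge0.
  apply: decay_fin.
  apply: (@expdecay R (fun t => K - Nt t) (fun t => 0 - dN t) lam _ _ _ t t0).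
  + by move=> z; apply: cvgB; [exact: cvg_cst| exact: cN].
  + by move=> u u0; have := dNt u u0 => H; apply: is_deriveB.
  move=> u u0; rewrite sub0r dNE mulNr lerN2; apply: ler_wpM2r.
    by rewrite subr_ge0 hNK // ltW.
  rewrite /lam ler_pdivrMr // divfK //.
  apply: (le_trans _ (Sge u (ltW u0))); apply: ler_wpM2l; first exact: ltW.
  exact: Nmono (ltW u0).
- have hKN (t : R) : 0 <= t -> K <= Nt t.
    move=> t0; rewrite -subr_ge0.
    apply: (@negpart1 R (fun t => Nt t - K) (fun t => dN t - 0) _ _ _ _ t t0).
    + by move=> z; apply: cvgB; [exact: cN| exact: cvg_cst].
    + by move=> u u0; have := dNt u u0 => H; apply: is_deriveB.
    + by rewrite subr_ge0 ltW.
    move=> T T0; exists 0 => u u0 _; rewrite mul0r subr0 dNE.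
    have -> : K - Nt u = - (Nt u - K) by rewrite opprB.
    rewrite !mulrN oppr_le0 mulrCA nsq_min; apply: mulr_ge0; first exact: SK0 (ltW u0).
    by rewrite /nsq sqr_ge0.
  have Kneg (t : R) : 0 <= t -> 1 - Nt t / K <= 0.
    by move=> t0; rewrite subr_le0 ler_pdivlMr // mul1r hKN.
  have hlow (t : R) : 0 <= t -> umax t <= Nt t.
    apply: (@cmp R K xp umax Nt (fun _ => 0) (fun t => (S t - xp * Nt t) * (1 - Nt t / K)) cumax cN dumax' (dNa xp)); last by rewrite umax0.
    move=> u u0; apply: mulr_le0; last exact: Kneg (ltW u0).
    by rewrite subr_le0; exact: Sle (ltW u0).
  have hup (t : R) : 0 <= t -> Nt t <= umin t.
    apply: (@cmp R K xm Nt umin (fun t => (S t - xm * Nt t) * (1 - Nt t / K)) (fun _ => 0) cN cumin (dNa xm) dumin'); last by rewrite umin0.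
    move=> u u0; apply: mulr_ge0_le0; last exact: Kneg (ltW u0).
    by rewrite subr_ge0; exact: Sge (ltW u0).
  split; last first.
    move=> t t0; apply/andP; split; first by rewrite ge_min hlow ?orbT.
    by rewrite le_max hup.
  exists `|Nt 0 - K|, xm; split => // t t0.
  rewrite ger0_norm; last by rewrite subr_ge0 hKN.
  rewrite ger0_norm; last by rewrite subr_ge0 ltW.
  apply: decay_fin.
  apply: (@expdecay R (fun t => Nt t - K) (fun t => dN t - 0) xm _ _ _ t t0).
  + by move=> z; apply: cvgB; [exact: cN| exact: cvg_cst].
  + by move=> u u0; have := dNt u u0 => H; apply: is_deriveB.
  move=> u u0; rewrite subr0 dNE.
  have -> : K - Nt u = - (Nt u - K) by rewrite opprB.
  rewrite mulrN mulNr lerN2; apply: ler_wpM2r.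
    by rewrite subr_ge0 hKN // ltW.
  rewrite ler_pdivlMr //.
  apply: (le_trans _ (Sge u (ltW u0))); apply: ler_wpM2l; first exact: ltW.
  exact: hKN (ltW u0).
Qed.
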